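(* Let $q$ be a prime power, $k<n$ integers and ${\mathcal D}$ a probability distribution on $\{0,1,\dots,k\}$. Consider the following randomized algorithm PrangeOne on input ${\mathbf{H}}\in\mathbb{F}_q^{(n-k)\times n}$ and ${\mathbf{s}}\in\mathbb{F}_q^{n-k}$: draw $t\sim{\mathcal D}$; let ${\mathcal I}$ be an information set of the code $\{{\mathbf{x}}:{\mathbf{x}}{\mathbf{H}}^\top={\mathbf{0}}\}$ (a set of $k$ positions whose complement indexes $n-k$ linearly independent columns of ${\mathbf{H}}$); draw ${\mathbf{x}}$ uniformly among the vectors of $\mathbb{F}_q^n$ with $|{\mathbf{x}}_{\mathcal I}|=t$; output the unique ${\mathbf{e}}\in\mathbb{F}_q^n$ with ${\mathbf{e}}{\mathbf{H}}^\top={\mathbf{s}}$ and ${\mathbf{e}}_{\mathcal I}={\mathbf{x}}_{\mathcal I}$. When ${\mathbf{H}}$ is chosen uniformly at random in $\mathbb{F}_q^{(n-k)\times n}$ and ${\mathbf{s}}$ uniformly at random in $\mathbb{F}_q^{n-k}$, the output ${\mathbf{e}}$ satisfies $|{\mathbf{e}}|=S+T$, where $S\in\{0,\dots,n-k\}$ and $T\in\{0,\dots,k\}$ are independent random variables, $S$ is distributed as the Hamming weight of a uniformly random vector of $\mathbb{F}_q^{n-k}$, and $\mathbb{P}(T=t)={\mathcal D}(t)$. Consequently $$\mathbb{P}(|{\mathbf{e}}|=w)=\sum_{t=0}^{w}\frac{\binom{n-k}{w-t}(q-1)^{w-t}}{q^{n-k}}{\mathcal D}(t),\qquad \mathbb{E}(|{\mathbf{e}}|)=\overline{{\mathcal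 D}}+\frac{q-1}{q}(n-k),$$ where $\overline{{\mathcal D}}=\sum_{t=0}^k t\,{\mathcal D}(t)$.
   Context: $|{\mathbf{x}}|$ denotes the Hamming weight (number of nonzero coordinates) of ${\mathbf{x}}$; ${\mathbf{x}}_{\mathcal I}$ denotes the restriction of ${\mathbf{x}}$ to the coordinates in ${\mathcal I}$. *)

(* Defs.v *)
From HB Require Import structures.
From mathcomp Require Import all_boot all_order all_algebra.
Set Implicit Arguments. Unset Strict Implicit. Unset Printing Implicit Defensive.
Import Order.TTheory GRing.Theory Num.Theory.
Local Open Scope ring_scope.

Section Prange.
Variable F : finFieldType.

Definition wt m (x : 'rV[F]_m) : nat := #|[set i | x 0 i != 0]|.

Definition wtI n (I : {set 'I_n}) (x : 'rV[F]_n) : nat :=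
  #|[set i in I | x 0 i != 0]|.

(* H with every column outside J replaced by zero; its rank is the
   dimension of the span of the columns indexed by J. *)
Definition keep_cols m n (H : 'M[F]_(m, n)) (J : {set 'I_n}) : 'M[F]_(m, n) :=
  \matrix_(i, j) (if j \in J then H i j else 0).

Definition is_info_set (k m n : nat) (H : 'M[F]_(m, n)) (I : {set 'I_n}) : bool :=
  (#|I| == k) && (\rank (keep_cols H (~: I)) == #|~: I|).

(* Output of PrangeOne: the unique e with e H^T = s and e_I = x_I
   (0 if no such e exists, which never happens for info sets). *)
Definition prange_out m n (H : 'M[F]_(m, n)) (s : 'rV[F]_m) (I : {set 'I_n})
    (x : 'rV[F]_n) : 'rV[F]_n :=
  odflt 0 [pick e : 'rV[F]_n | (e *m H^T == s) && [forall i in I, e 0 i == x 0 i]].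

Variable R : realFieldType.

(* Expectation of f(e), e the output of PrangeOne, where H is uniform among
   the (n-k) x n matrices admitting an information set (i.e. of full rank
   n-k), s uniform in F^(n-k), t ~ D, the information set is choose H and
   x is uniform among the x in F^n with |x_I| = t. *)
Definition prange_expect (n k : nat) (D : 'I_k.+1 -> R)
    (choose : 'M[F]_(n - k, n) -> {set 'I_n}) (f : 'rV[F]_n -> R) : R :=
  \sum_(H : 'M[F]_(n - k, n) | \rank H == (n - k)%N)
   \sum_(s : 'rV[F]_(n - k))
   \sum_(t : 'I_k.+1)
   \sum_(x : 'rV[F]_n | wtI (choose H) x == t)
     ((#|[set H' : 'M[F]_(n - k, n) | \rank H' == (n - k)%N]|%:R)^-1
      * ((#|F| ^ (n - k))%:R)^-1 * D t
      * (#|[set x' : 'rV[F]_n | wtI (choose H) x' == t]|%:R)^-1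
      * f (prange_out H s (choose H) x)).

Definition lawS (m : nat) (a : nat) : R :=
  #|[set y : 'rV[F]_m | wt y == a]|%:R / (#|F| ^ m)%:R.

End Prange.

(* Main.v *)
Require Import Defs.
From HB Require Import structures.
From mathcomp Require Import all_boot all_order all_algebra ring lra.
Set Implicit Arguments. Unset Strict Implicit. Unset Printing Implicit Defensive.
Import Order.TTheory GRing.Theory Num.Theory.
Local Open Scope ring_scope.

Section Count.
Variable F : finFieldType.
Local Notation q := #|F|.

Definition V n (J : {set 'I_n}) : {set 'rV[F]_n} :=
  [set d : 'rV[F]_n | [forall i, (i \notin J) ==> (d 0 i == 0)]].

Definition ffr n (y : 'rV[F]_n) : {ffun 'I_n -> F} := [ffun i => y 0 i].
Definition rowf n (f : {ffun 'I_n -> F}) : 'rV[F]_n := \row_i f i.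
Lemma rowfK n : cancel (@rowf n) (@ffr n).
Proof. by move=> f; apply/ffunP=> i; rewrite !ffunE mxE. Qed.
Lemma ffrK n : cancel (@ffr n) (@rowf n).
Proof. by move=> y; apply/rowP=> i; rewrite mxE ffunE. Qed.

Lemma card_transport n (P : pred {ffun 'I_n -> F}) :
  #|[set y : 'rV[F]_n | P (ffr y)]| = #|[set f | P f]|.
Proof.
rewrite -(card_imset _ (can_inj (@rowfK n))); apply: eq_card => y; rewrite inE.
apply/idP/imsetP => [Py | [f]]; first by exists (ffr y); rewrite ?inE ?ffrK.
by rewrite inE => Pf ->; rewrite rowfK.
Qed.

Lemma card_V n (J : {set 'I_n}) : #|V J| = (q ^ #|J|)%N.
Proof.
transitivity #|[set y : 'rV[F]_n | [forall i, (i \notin J) ==> (ffr y i == 0)]]|.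
  by apply: eq_card => y; rewrite !inE; apply: eq_forallb => i; rewrite ffunE.
rewrite (@card_transport n (fun f => [forall i, (i \notin J) ==> (f i == 0)])).
have -> : q = #|(predT : pred F)| by apply: eq_card.
rewrite -(card_pffun_on 0); apply: eq_card => f; rewrite inE.
apply/forallP/pffun_onP => [H | [/subsetP H _] i].
  split=> [|//]; apply/subsetP => i; rewrite inE; apply: contraR => iJ.
  by have /implyP := H i; apply.
by apply/implyP; apply: contraR => fi; apply: H; rewrite inE.
Qed.

Lemma card_Vw n (J : {set 'I_n}) (a : nat) :
  #|[set d in V J | wt d == a]| = ('C(#|J|, a) * (q - 1) ^ a)%N.
Proof.
pose P (f : {ffun 'I_n -> F}) :=
  [forall i, (i \notin J) ==> (f i == 0)] && (#|[set i | f i != 0]| == a).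
transitivity #|[set y : 'rV[F]_n | P (ffr y)]|.
  apply: eq_card => y; rewrite !inE /P /wt; congr andb.
    by apply: eq_forallb => i; rewrite ffunE.
  by congr (_ == _); apply: eq_card => i; rewrite !inE ffunE.
rewrite (@card_transport n P) -sum1dep_card.
rewrite (partition_big (fun f : {ffun 'I_n -> F} => [set i | f i != 0])
   (fun S => (S \subset J) && (#|S| == a))) /=; last first.
  move=> f /andP[/forallP H ->]; rewrite andbT; apply/subsetP => i.
  by rewrite inE; apply: contraR => iJ; have /implyP := H i; apply.
rewrite (eq_bigr (fun _ => (q - 1) ^ a)%N); last first.
  move=> S /andP[SJ /eqP Sa]; rewrite sum1dep_card.
  rewrite -Sa subn1 -(cardC1 (0:F)) -(card_pffun_on 0); apply: eq_card => f; rewrite inE.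
  apply/andP/pffun_onP => [[_ /eqP <-] | [/subsetP sS iS]].
    split; first by apply/subsetP => i; rewrite !inE.
    by move=> y /imageP[i]; rewrite inE => fi ->; rewrite !inE.
  have eS : [set i | f i != 0] = S.
    apply/setP => i; rewrite inE; apply/idP/idP => [fi|iS']; first by apply: sS; rewrite inE.
    have : f i \in predC1 0 by apply: iS; apply/imageP; exists i.
    by rewrite !inE.
  rewrite eS eqxx; split=> //; rewrite /P eS Sa eqxx andbT; apply/forallP => i; apply/implyP => iJ.
  apply: contraR iJ => fi; apply: (subsetP SJ); rewrite -eS inE //.
rewrite -cards_draws -sum1dep_card big_distrl /=; apply: eq_bigr => *; by rewrite mul1n.
Qed.


Lemma sum_b (T : finType) (A : {pred T}) (P : pred T) :
  (\sum_(d in A) (P d : nat) = #|[set d in A | P d]|)%N.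
Proof.
rewrite -sum1_card big_mkcond [RHS]big_mkcond /=; apply: eq_bigr => d _.
by rewrite !inE; case: (d \in A); case: (P d).
Qed.

Lemma wt_sum n (y : 'rV[F]_n) : wt y = (\sum_i (y 0%R i != 0%R : nat))%N.
Proof. by rewrite /wt -sum1dep_card big_mkcond /=; apply: eq_bigr => i _; case: (_ != 0). Qed.

Lemma sum_wt_V n (J : {set 'I_n}) :
  (\sum_(d in V J) wt d = #|J| * (q ^ #|J| - q ^ #|J|.-1))%N.
Proof.
rewrite (eq_bigr _ (fun d _ => wt_sum d)) exchange_big /=.
rewrite (eq_bigr (fun i => if i \in J then (q ^ #|J| - q ^ #|J|.-1)%N else 0%N)).
  by rewrite -big_mkcond /= sum_nat_const.
move=> i _; rewrite sum_b; case: ifP => iJ.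
  have sub : V (J :\ i) \subset V J.
    apply/subsetP => d; rewrite !inE => /forallP H; apply/forallP => j.
    apply/implyP => jJ; have /implyP := H j; apply; by rewrite !inE negb_and jJ orbT.
  transitivity #|V J :\: V (J :\ i)|.
    apply: eq_card => d; rewrite !inE; apply/idP/idP => [/andP[Vd di]|/andP[Vd' Vd]]; apply/andP; split => //.
      apply: contra di => /forallP H; have /implyP := H i; apply; by rewrite !inE eqxx.
    apply: contra Vd' => di; apply/forallP => j; apply/implyP; rewrite !inE negb_and negbK.
    case/orP => [/eqP -> //|jJ]; by move/forallP: Vd => /(_ j) /implyP; apply.
  by rewrite cardsD (setIidPr sub) !card_V (cardsD1 i J) iJ.
apply: eq_card0 => d; rewrite !inE; apply/negP => /andP[/forallP H].
by have /implyP := H i; rewrite iJ => /(_ isT) ->.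
Qed.


Definition rI n (I : {set 'I_n}) (x : 'rV[F]_n) : 'rV[F]_n :=
  \row_i (if i \in I then x 0 i else 0).

Lemma keep_mul m n (H : 'M[F]_(m, n)) (J : {set 'I_n}) (u : 'rV[F]_n) :
  u *m (keep_cols H J)^T = rI J u *m H^T.
Proof.
apply/rowP => i; rewrite !mxE; apply: eq_bigr => j _; rewrite !mxE.
by case: ifP => _; rewrite ?mul0r ?mulr0.
Qed.

Lemma core (R : realFieldType) m n (H : 'M[F]_(m, n)) (I : {set 'I_n}) (x : 'rV[F]_n)
    (f : 'rV[F]_n -> R) :
  \rank (keep_cols H (~: I)) = #|~: I| -> #|~: I| = m ->
  \sum_(s : 'rV[F]_m) f (prange_out H s I x) = \sum_(d in V (~: I)) f (rI I x + d).
Proof.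
move=> hrk hc; set J := ~: I.
pose psi d := (rI I x + d) *m H^T.
have fullK : row_full (keep_cols H J)^T by rewrite /row_full mxrank_tr hrk hc.
have surj s : exists2 d, d \in V J & psi d = s.
  have /submxP [u hu] := submx_full (s - rI I x *m H^T) fullK.
  exists (rI J u).
    rewrite inE; apply/forallP => i; apply/implyP => iJ; rewrite mxE.
    by rewrite (negbTE iJ).
  by rewrite /psi mulmxDl -(keep_mul H J u) -hu addrC subrK.
have imT : psi @: V J = setT.
  by apply/setP => s; rewrite inE; have [d Vd <-] := surj s; apply: imset_f.
have inj : {in V J &, injective psi}.
  apply/imset_injP; rewrite imT cardsT card_mx card_V hc mul1n //.
have out d : d \in V J -> prange_out H (psi d) I x = rI I x + d.
  move=> Vd; move: (Vd); rewrite inE => /forallP VdP.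
  rewrite /prange_out; case: pickP => [e /andP[/eqP he /forallP hx] | none]; last first.
    have := none (rI I x + d); rewrite eqxx /=; move/negP; case.
    apply/forallP => i; apply/implyP => iI; rewrite !mxE iI.
    have /implyP := VdP i; rewrite inE iI => /(_ isT) /eqP ->; by rewrite addr0.
  have Ve : e - rI I x \in V J.
    rewrite inE; apply/forallP => i; apply/implyP; rewrite inE negbK => iI.
    have /implyP := hx i; move/(_ iI)/eqP => hh; rewrite !mxE iI subr_eq0; apply/eqP; exact: hh.
  have := inj _ _ Ve Vd; rewrite /psi addrC subrK he => /(_ erefl) <-.
  by rewrite /= addrC subrK.
transitivity (\sum_(s in psi @: V J) f (prange_out H s I x)).
  by rewrite imT; apply: eq_bigl => s; rewrite inE.
by rewrite big_imset //=; apply: eq_bigr => d Vd; rewrite out.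
Qed.


Lemma wt_add n (I : {set 'I_n}) (x d : 'rV[F]_n) :
  d \in V (~: I) -> wt (rI I x + d) = (wtI I x + wt d)%N.
Proof.
rewrite inE => /forallP Vd.
have d0 i : i \in I -> d 0 i = 0.
  by move=> iI; have /implyP := Vd i; rewrite inE iI => /(_ isT) /eqP.
rewrite /wt -(cardsID I); congr (_ + _)%N; apply: eq_card => i; rewrite !inE !mxE.
  by case iI: (i \in I); rewrite ?andbF // [d _ i]d0 // addr0 ?andbT.
case iI: (i \in I) => /=; first by rewrite [d _ i]d0 // eqxx.
by rewrite add0r.
Qed.

Lemma wt_le n (y : 'rV[F]_n) : (wt y <= n)%N.
Proof. by rewrite /wt; apply: leq_trans (max_card _) _; rewrite card_ord. Qed.

Lemma exists_wtI n (I : {set 'I_n}) (t : nat) :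
  (t <= #|I|)%N -> exists x : 'rV[F]_n, wtI I x = t.
Proof.
rewrite -bin_gt0 -cards_draws card_gt0 => /set0Pn [S]; rewrite inE => /andP[SI /eqP St].
exists (\row_i (if i \in S then 1 else 0)); rewrite /wtI -St; apply: eq_card => i.
rewrite !inE mxE; case iS: (i \in S); last by rewrite eqxx andbF.
by rewrite oner_eq0 andbT (subsetP SI).
Qed.

Section WithR.
Variable R : realFieldType.

Lemma sum_by_wt n b (A : {pred 'rV[F]_n}) (h : nat -> R) : (n <= b)%N ->
  \sum_(d in A) h (wt d) = \sum_(a < b.+1) (#|[set d in A | wt d == a]|)%:R * h a.
Proof.
move=> nb.
rewrite (partition_big (fun d => (inord (wt d) : 'I_b.+1)) xpredT) //=.
apply: eq_bigr => a _.
transitivity (\sum_(d in [set d in A | wt d == a]) h a).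
  apply: eq_big => d; rewrite ?inE;
    have wl : (wt d < b.+1)%N by rewrite ltnS (leq_trans (wt_le d)).
    congr (_ && _); apply/eqP/eqP => [<-|e]; first by rewrite inordK.
    by apply: val_inj; rewrite /= inordK.
  by move=> /andP[_ /eqP <-]; rewrite inordK.
by rewrite sumr_const mulr_natl.
Qed.

Lemma transport n m (J : {set 'I_n}) (h : nat -> R) : #|J| = m -> (m <= n)%N ->
  \sum_(d in V J) h (wt d) = \sum_(y : 'rV[F]_m) h (wt y).
Proof.
move=> Jm mn.
rewrite (sum_by_wt _ _ (leqnn n)).
transitivity (\sum_(y in V [set: 'I_m]) h (wt y)); last first.
  by apply: eq_bigl => y; rewrite inE; apply/forallP => i; rewrite inE.
rewrite (sum_by_wt _ _ mn).
apply: eq_bigr => a _; by rewrite !card_Vw cardsT card_ord Jm.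
Qed.


Lemma reduce n k (D : 'I_k.+1 -> R) (choose : 'M[F]_(n - k, n) -> {set 'I_n})
    (g : nat -> R) :
  (k < n)%N ->
  (forall H : 'M[F]_(n - k, n), \rank H = (n - k)%N -> is_info_set k H (choose H)) ->
  prange_expect D choose (fun e => g (wt e)) =
  \sum_(t < k.+1) D t * (((q ^ (n - k))%:R)^-1 * \sum_(y : 'rV[F]_(n - k)) g (t + wt y)%N).
Proof.
move=> kn hinfo.
rewrite /prange_expect.
set cH := (#|[set H' : 'M[F]_(n - k, n) | \rank H' == (n - k)%N]|%:R)^-1.
set cq := ((q ^ (n - k))%:R)^-1.
set Y := \sum_(t < k.+1) _.
transitivity (\sum_(H : 'M[F]_(n - k, n) | \rank H == (n - k)%N) (cH * Y)).
  apply: eq_bigr => H /eqP rk.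
  have /andP [/eqP cI /eqP rkI] := hinfo H rk.
  have cJ : #|~: choose H| = (n - k)%N.
    by apply/eqP; rewrite -(eqn_add2l #|choose H|) cardsC cI card_ord subnKC // ltnW.
  rewrite exchange_big /= /Y big_distrr /=; apply: eq_bigr => t _.
  rewrite exchange_big /=.
  set cx := (#|[set x' : 'rV[F]_n | wtI (choose H) x' == t]|%:R)^-1.
  transitivity (\sum_(x in [set x' : 'rV[F]_n | wtI (choose H) x' == t])
      (cH * (D t * (cq * \sum_(y : 'rV[F]_(n - k)) g (t + wt y)%N)) * cx)).
    apply: eq_big => [x|x]; first by rewrite inE.
    move=> /eqP hxt.
    rewrite -big_distrr /= (@core R _ _ H (choose H) x (fun e : 'rV[F]_n => g (wt e)) rkI cJ).
    rewrite [X in _ * X = _](eq_bigr (fun d => g (wtI (choose H) x + wt d)%N)); last first.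
      by move=> d Vd; rewrite wt_add.
    rewrite hxt (transport (fun a => g (t + a)%N) cJ (leq_subr k n)).
    rewrite /cx /cq /cH; ring.
  rewrite sumr_const -mulr_natr -mulrA mulVf ?mulr1 //.
  have [x0 hx0] : exists x0 : 'rV[F]_n, wtI (choose H) x0 = t.
    by apply: exists_wtI; rewrite cI -ltnS ltn_ord.
  rewrite pnatr_eq0 -lt0n card_gt0; apply/set0Pn; exists x0; by rewrite inE hx0.
rewrite -big_distrl /=.
transitivity ((\sum_(H in [set H' : 'M[F]_(n - k, n) | \rank H' == (n - k)%N]) cH) * Y).
  by congr (_ * _); apply: eq_bigl => H; rewrite inE.
rewrite sumr_const -mulr_natl /cH mulfV ?mul1r //.
rewrite pnatr_eq0 -lt0n card_gt0; apply/set0Pn; exists (pid_mx (n - k)).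
by rewrite inE rank_pid_mx ?leq_subr.
Qed.


Lemma sum_by_wt_all n (h : nat -> R) :
  \sum_(d : 'rV[F]_n) h (wt d) = \sum_(a < n.+1) (#|[set d : 'rV[F]_n | wt d == a]|)%:R * h a.
Proof. exact: (sum_by_wt predT h (leqnn n)). Qed.

Lemma card_all m a : #|[set y : 'rV[F]_m | wt y == a]| = ('C(m, a) * (q - 1) ^ a)%N.
Proof.
rewrite -[in RHS](card_ord m) -cardsT -card_Vw; apply: eq_card => y; rewrite !inE.
by have -> : [forall i, (i \notin [set: 'I_m]) ==> (y 0 i == 0)] by apply/forallP => i; rewrite inE.
Qed.

Lemma sum_ind m (t w : nat) :
  \sum_(y : 'rV[F]_m) (((t + wt y)%N == w)%:R : R) =
  (if (t <= w)%N then ('C(m, w - t) * (q - 1) ^ (w - t))%N else 0%N)%:R.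
Proof.
rewrite -natr_sum; congr (_%:R).
transitivity #|[set y : 'rV[F]_m | (t + wt y)%N == w]|.
  by rewrite -sum1dep_card [RHS]big_mkcond; apply: eq_bigr => y _; case: eqP.
case: leqP => tw.
  rewrite -card_all; apply: eq_card => y; rewrite !inE.
  by apply/eqP/eqP => [<-|->]; [rewrite addKn | rewrite subnKC].
apply: eq_card0 => y; rewrite !inE; apply/negbTE; rewrite neq_ltn.
by rewrite (leq_trans tw) ?orbT // leq_addr.
Qed.

Lemma sum_wt_all m (t : nat) :
  \sum_(y : 'rV[F]_m) (((t + wt y)%N)%:R : R) =
  ((t * q ^ m) + m * (q ^ m - q ^ m.-1))%N%:R.
Proof.
rewrite -natr_sum big_split /=; congr (_%:R); congr (_ + _)%N.
  by rewrite sum_nat_const card_mx mul1n mulnC.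
transitivity (\sum_(y in V [set: 'I_m]) wt y)%N.
  by apply: eq_bigl => y; rewrite inE; apply/esym/forallP => i; rewrite inE.
by rewrite sum_wt_V cardsT card_ord.
Qed.

End WithR.

End Count.

Unset Implicit Arguments.

Theorem proposition2 (F : finFieldType) (R : realFieldType) (n k : nat)
    (D : 'I_k.+1 -> R) (choose : 'M[F]_(n - k, n) -> {set 'I_n}) :
  (k < n)%N ->
  (forall t, 0 <= D t) -> \sum_(t < k.+1) D t = 1 ->
  (forall H : 'M[F]_(n - k, n), \rank H = (n - k)%N ->
      is_info_set k H (choose H)) ->
  let q := #|F| in
  let P (w : nat) := prange_expect D choose (fun e => (wt e == w)%:R) in
  [/\ (* |e| = S + T in law, S ~ weight of uniform vector of F^(n-k), T ~ D,
         S and T independent *)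
      forall w : nat,
        P w = \sum_(a < (n - k).+1) \sum_(t < k.+1 | (a + t == w)%N)
                lawS F R (n - k) a * D t,
      forall w : nat,
        P w = \sum_(t < k.+1 | (t <= w)%N)
                ('C(n - k, w - t) * (q - 1) ^ (w - t))%:R / (q ^ (n - k))%:R * D t
    & prange_expect D choose (fun e => (wt e)%:R)
        = \sum_(t < k.+1) (t%:R * D t) + (q - 1)%:R / q%:R * (n - k)%:R].
Proof.
move=> kn D0 D1 hinfo q P; split.
- move=> w; rewrite /P.
  etransitivity; first exact: (@reduce F R n k D choose (fun a => (a == w)%:R) kn hinfo).
  rewrite [RHS](eq_bigr (fun a : 'I_(n - k).+1 => \sum_(t < k.+1)
      (((a + t)%N == w)%:R * (lawS F R (n - k) a * D t)))); last first.
    move=> a _; rewrite big_mkcond /=; apply: eq_bigr => t _.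
    by case: eqP; rewrite ?mul1r ?mul0r.
  rewrite [RHS]exchange_big /=; apply: eq_bigr => t _.
  rewrite (@sum_by_wt_all F R (n - k) (fun a => (((t + a)%N == w)%:R : R))) /lawS !big_distrr /=; apply: eq_bigr => a _.
  rewrite addnC; ring.
- move=> w; rewrite /P.
  etransitivity; first exact: (@reduce F R n k D choose (fun a => (a == w)%:R) kn hinfo).
  rewrite [RHS]big_mkcond /=; apply: eq_bigr => t _.
  rewrite sum_ind; case: leqP => _; last by rewrite !mulr0.
  rewrite /q; ring.
etransitivity; first exact: (@reduce F R n k D choose (fun a => a%:R) kn hinfo).
have q0 : (0 < q)%N by apply/card_gt0P; exists 0.
have eqm : (q ^ (n - k) = q * q ^ (n - k).-1)%N by rewrite -expnS prednK // subn_gt0.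
have eqd : (q ^ (n - k) - q ^ (n - k).-1 = (q - 1) * q ^ (n - k).-1)%N.
  by rewrite {1}eqm mulnBl mul1n.
have qR : (q%:R : R) != 0 by rewrite pnatr_eq0 -lt0n.
have QR : ((q ^ (n - k).-1)%:R : R) != 0 by rewrite pnatr_eq0 -lt0n expn_gt0 q0.
rewrite (eq_bigr (fun t : 'I_k.+1 => t%:R * D t + D t * ((q - 1)%:R / q%:R * (n - k)%:R))).
  by rewrite big_split /= -big_distrl /= D1 mul1r.
move=> t _; rewrite sum_wt_all -/q eqd eqm !natrD !natrM.
field; by rewrite qR QR.
Qed.
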